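(* Let $k$ be a field, $V$ an $n$-dimensional $k$-vector space, $S=\operatorname{Sym}V=k[x_1,\dots,x_n]$, and suppose $f\in S_{d+1}$ is a direct sum; let $\bar f$ be its image in $\mathbb{P}S_{d+1}$. Then: (1) If $k\neq\mathbb{F}_2$, there is a non-trivial one-parameter subgroup $\rho\colon\mathbb{G}_m\hookrightarrow\mathrm{SL}(V)$ defined over $k$ such that $\rho\cdot\langle\nabla f\rangle=\langle\nabla f\rangle$ but $\rho\cdot\bar f\neq\bar f$. Consequently $\mathrm{Stab}_{\mathrm{SL}(V)}(\bar f)$ is a proper subgroup of $\mathrm{Stab}_{\mathrm{SL}(V)}(\langle\nabla f\rangle)$. (2) The set of $k$-points of $\{\bar g\in\mathbb{P}S_{d+1}\mid\langle\nabla g\rangle=\langle\nabla f\rangle\}$ contains a family of pairwise distinct points indexed by $k^*=k\setminus\{0\}$. (3) If moreover $\dim_k\langle\nabla f\rangle=n$, then the point $\nabla f\in\operatorname{Grass}(n,S_d)$ is a balanced direct sum, and the set of $k$-points of $\{\bar g\in\mathbb{P}S_{d+1}\mid\langle\nabla g\rangle=\langle\nabla f\rangle \text{ and } \langle\nabla(f-cg)\rangle\neq 0 \text{ for all } c\in k\}$ contains a family of pairwise distinct points indexed by $k\setminus\{0,1\}$.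
   Context: For $f\in S_{d+1}$, $\langle\nabla f\rangle=\langle\partial f/\partial x_1,\dots,\partial f/\partial x_n\rangle\subset S_d$ is the $k$-span of the first partials; when it has dimension $n$, $\nabla f$ denotes the corresponding point of $\operatorname{Grass}(n,S_d)$. A form $f\in S_{d+1}$ is a direct sum if there is a decomposition $V=U\oplus W$ and nonzero $f_1\in\operatorname{Sym}^{d+1}U$, $f_2\in\operatorname{Sym}^{d+1}W$ with $f=f_1+f_2$. A subspace $L\subset\operatorname{Sym}^dV$ of dimension $m$ is a direct sum if there is a non-trivial decomposition $V=U\oplus W$ and subspaces $L_1\subset\operatorname{Sym}^dU$, $L_2\subset\operatorname{Sym}^dW$ of dimensions $m_1+m_2=m$ with $L=L_1+L_2$; it is a balanced direct sum if moreover $m_1=\dim_kU$ and $m_2=\dim_kW$. *)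

(* Defs.v *)
From HB Require Import structures.
From mathcomp Require Import all_boot all_order all_algebra.
From mathcomp Require Import mpoly.
Set Implicit Arguments. Unset Strict Implicit. Unset Printing Implicit Defensive.
Import Order.TTheory GRing.Theory Num.Theory.
Local Open Scope ring_scope.

(* S = Sym V = K[x_1..x_n];  V is identified with S_1 (linear forms), an
   element of V being given by its coordinate row vector v : 'rV_n. *)
Definition linform (K : fieldType) (n : nat) (v : 'rV[K]_n) : {mpoly K[n]} :=
  \sum_(i < n) v 0 i *: 'X_i.

Definition in_sym (K : fieldType) (n : nat) (U : {vspace 'rV[K]_n}) (m : nat)
    (p : {mpoly K[n]}) : Prop :=
  exists r : seq (K * m.-tuple 'rV[K]_n),
    (forall a, a \in r -> forall v, v \in tval a.2 -> v \in U) /\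
    p = \sum_(a <- r) a.1 *: \prod_(v <- tval a.2) linform v.

Definition subsp (K : fieldType) (n : nat) := {mpoly K[n]} -> Prop.

Definition same_sp (K : fieldType) (n : nat) (L1 L2 : subsp K n) : Prop :=
  forall q, L1 q <-> L2 q.

Definition grad_span (K : fieldType) (n : nat) (f : {mpoly K[n]}) : subsp K n :=
  fun q => exists c : 'I_n -> K, q = \sum_(i < n) c i *: mderiv i f.

Definition span_fam (K : fieldType) (n m : nat) (b : 'I_m -> {mpoly K[n]}) : subsp K n :=
  fun q => exists c : 'I_m -> K, q = \sum_(i < m) c i *: b i.

Definition free_fam (K : fieldType) (n m : nat) (b : 'I_m -> {mpoly K[n]}) : Prop :=
  forall c : 'I_m -> K, \sum_(i < m) c i *: b i = 0 -> forall i, c i = 0.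

Definition act (K : fieldType) (n : nat) (g : 'M[K]_n) (p : {mpoly K[n]}) : {mpoly K[n]} :=
  p \mPo [tuple \sum_(j < n) g i j *: 'X_j | i < n].

Definition act_sp (K : fieldType) (n : nat) (g : 'M[K]_n) (L : subsp K n) : subsp K n :=
  fun q => exists p, L p /\ q = act g p.

(* equality of the points bar f, bar g of P S for nonzero f, g *)
Definition same_point (K : fieldType) (n : nat) (f g : {mpoly K[n]}) : Prop :=
  exists c : K, c != 0 /\ g = c *: f.

Definition is_direct_sum (K : fieldType) (n d : nat) (f : {mpoly K[n]}) : Prop :=
  exists (U W : {vspace 'rV[K]_n}),
    (U + W = fullv)%VS /\ (U :&: W = 0)%VS /\
    exists f1 f2 : {mpoly K[n]},
      f1 != 0 /\ f2 != 0 /\ in_sym U d.+1 f1 /\ in_sym W d.+1 f2 /\ f = f1 + f2.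

Definition is_balanced_direct_sum (K : fieldType) (n d : nat) (L : subsp K n) : Prop :=
  exists (U W : {vspace 'rV[K]_n}),
    (U + W = fullv)%VS /\ (U :&: W = 0)%VS /\ U != 0%VS /\ W != 0%VS /\
    exists (b1 : 'I_(\dim U) -> {mpoly K[n]}) (b2 : 'I_(\dim W) -> {mpoly K[n]}),
      (forall i, in_sym U d (b1 i)) /\ free_fam b1 /\
      (forall i, in_sym W d (b2 i)) /\ free_fam b2 /\
      same_sp L (fun q => exists q1 q2, span_fam b1 q1 /\ span_fam b2 q2 /\ q = q1 + q2).

(* Since G_m is a split torus,
   every such rho is diagonalizable over k: there are a k-basis (columns of an
   invertible Q) and integer weights w with sum w = 0 (det = 1) such that
   rho(t) = Q diag(t^{w_i}) Q^{-1}.  rho_at Q w iota t is rho(t) for a point t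
   of G_m with values in a field K over k (via iota). *)
Definition rho_at (k K : fieldType) (n : nat) (iota : {rmorphism k -> K})
    (Q : 'M[k]_n) (w : 'I_n -> int) (t : K) : 'M[K]_n :=
  map_mx iota Q *m diag_mx (\row_i (t ^ (w i))) *m invmx (map_mx iota Q).

Definition one_param_subgroup (k : fieldType) (n : nat) (Q : 'M[k]_n) (w : 'I_n -> int) : Prop :=
  Q \in unitmx /\ \sum_(i < n) w i = 0 /\
  (* non-trivial, and G_m -> SL(V) a closed embedding: gcd of the weights is 1 *)
  (exists i, w i != 0) /\ \big[gcdn/0%N]_(i < n) `|w i|%N = 1%N.

(* Main.v *)
Require Import Defs.
From HB Require Import structures.
From mathcomp Require Import all_boot all_order all_algebra.
From mathcomp Require Import mpoly fraction.
Import GRing.Theory.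
Local Open Scope ring_scope.
Set Implicit Arguments. Unset Strict Implicit. Unset Printing Implicit Defensive.

Section Gen.
Variables (K : fieldType) (n : nat).
Implicit Types (g : 'M[K]_n) (p q : {mpoly K[n]}).

Lemma gen_ind (P : {mpoly K[n]} -> Prop) :
  P 1 -> (forall i, P 'X_i) -> (forall c p, P p -> P (c *: p)) ->
  (forall p q, P p -> P q -> P (p + q)) -> (forall p q, P p -> P q -> P (p * q)) ->
  forall p, P p.
Proof.
move=> P1 PX PZ PD PM; have P0 : P 0 by rewrite -(scale0r 1); apply: PZ.
elim/mpolyind => // c m p _ _ Pp; apply: PD => //; apply: PZ.
rewrite mpolyXE_id; apply: (big_ind P) => // i _.
elim: (m i) => [|k IH]; first by rewrite expr0.
by rewrite exprS; apply: PM.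
Qed.

Lemma mderivXi (l j : 'I_n) : mderiv l ('X_j : {mpoly K[n]}) = (j == l)%:R.
Proof.
rewrite mderivX mnm1E; case: eqP => [->|_]; last by rewrite scale0r.
have -> : (U_(l) - U_(l) = 0)%MM by apply/mnmP => i; rewrite mnmBE subnn mnm0E.
  by rewrite mpolyX0 scale1r.
Qed.

Lemma act_X (g : 'M[K]_n) i : act g 'X_i = \sum_(j < n) g i j *: 'X_j.
Proof. by rewrite /act comp_mpolyXU -tnth_nth tnth_mktuple. Qed.

Lemma actD g p q : act g (p + q) = act g p + act g q.
Proof. exact: comp_mpolyD. Qed.
Lemma actZ g c p : act g (c *: p) = c *: act g p.
Proof. exact: comp_mpolyZ. Qed.
Lemma actM g p q : act g (p * q) = act g p * act g q.
Proof. exact: rmorphM. Qed.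
Lemma act1 g : act g 1 = 1.
Proof. exact: rmorph1. Qed.
Lemma act0 g : act g 0 = 0.
Proof. exact: raddf0. Qed.
Lemma act_sum g I (r : seq I) P F : act g (\sum_(i <- r | P i) F i) = \sum_(i <- r | P i) act g (F i).
Proof. exact: raddf_sum. Qed.
Lemma act_prod g I (r : seq I) P F : act g (\prod_(i <- r | P i) F i) = \prod_(i <- r | P i) act g (F i).
Proof. exact: rmorph_prod. Qed.

Lemma chain g (p : {mpoly K[n]}) l :
  mderiv l (act g p) = \sum_(i < n) g i l *: act g (mderiv i p).
Proof.
elim/gen_ind: p l => [l|j l|c p IH l|p q IHp IHq l|p q IHp IHq l].
- rewrite act1 -mpolyC1 mderivC; apply/esym/big1 => i _.
  by rewrite mderivC act0 scaler0.
- rewrite act_X raddf_sum /=.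
  under eq_bigr do rewrite mderivZ mderivXi.
  under [RHS]eq_bigr do rewrite mderivXi.
  rewrite (bigD1 l) //= eqxx big1 ?addr0; last first.
    by move=> i /negbTE; rewrite eq_sym => ->; rewrite scaler0.
  rewrite (bigD1 j) //= eqxx big1 ?addr0; last first.
    by move=> i /negbTE; rewrite eq_sym => ->; rewrite act0 scaler0.
  by rewrite act1.
- rewrite actZ mderivZ IH scaler_sumr; apply: eq_bigr => i _.
  by rewrite mderivZ actZ !scalerA mulrC.
- rewrite actD mderivD IHp IHq -big_split; apply: eq_bigr => i _.
  by rewrite mderivD actD scalerDr.
- rewrite actM mderivM IHp IHq mulr_suml mulr_sumr -big_split; apply: eq_bigr => i _.
  by rewrite mderivM actD actM actM scalerDr -scalerAl -scalerAr.
Qed.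
End Gen.


Section Maps.
Variables (k K : fieldType) (iota : {rmorphism k -> K}) (n : nat).
Implicit Types (p q : {mpoly k[n]}).

Lemma mderiv1 (R : fieldType) i : mderiv i (1 : {mpoly R[n]}) = 0.
Proof. by have := mderivC i (1 : R); rewrite mpolyC1. Qed.

Lemma map_mderiv p i : map_mpoly iota (mderiv i p) = mderiv i (map_mpoly iota p).
Proof.
elim/gen_ind: p => [|j|c p IH|p q IHp IHq|p q IHp IHq].
- by rewrite rmorph1 !mderiv1 raddf0.
- by rewrite map_mpolyX !mderivXi rmorph_nat.
- by rewrite mderivZ !map_mpolyZ mderivZ IH.
- by rewrite mderivD !rmorphD /= mderivD IHp IHq.
- by rewrite mderivM rmorphD /= !rmorphM /= mderivM IHp IHq.
Qed.

Lemma map_linform (v : 'rV[k]_n) : map_mpoly iota (linform v) = linform (map_mx iota v).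
Proof.
rewrite /linform raddf_sum; apply: eq_bigr => i _ /=.
by rewrite (map_mpolyZ iota) map_mpolyX mxE.
Qed.

Lemma map_mpoly_eq0 p : map_mpoly iota p = 0 -> p = 0.
Proof.
move=> h; apply/mpolyP => m; have := congr1 (mcoeff m) h.
rewrite mcoeff_map_mpoly mcoeff0 => /eqP; rewrite fmorph_eq0 => /eqP ->.
by rewrite mcoeff0.
Qed.

End Maps.

Section Lin.
Variables (K : fieldType) (n : nat).
Implicit Types (g : 'M[K]_n) (p q : {mpoly K[n]}).

Lemma linformZ s (v : 'rV[K]_n) : linform (s *: v) = s *: linform v.
Proof.
rewrite /linform scaler_sumr; apply: eq_bigr => i _.
by rewrite mxE scalerA.
Qed.

Lemma linformD (v w : 'rV[K]_n) : linform (v + w) = linform v + linform w.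
Proof.
rewrite /linform -big_split; apply: eq_bigr => i _.
by rewrite mxE scalerDl.
Qed.

Lemma act_linform g (v : 'rV[K]_n) : act g (linform v) = linform (v *m g).
Proof.
rewrite /linform act_sum.
under eq_bigr do rewrite actZ act_X scaler_sumr.
rewrite exchange_big /=; apply: eq_bigr => j _.
rewrite mxE scaler_suml; apply: eq_bigr => i _.
by rewrite scalerA.
Qed.

Lemma prod_scale s (r : seq 'rV[K]_n) :
  \prod_(v <- r) linform (s *: v) = s ^+ size r *: \prod_(v <- r) linform v.
Proof.
elim: r => [|v r IH]; first by rewrite !big_nil expr0 scale1r.
rewrite !big_cons IH linformZ /= exprS -scalerAl -scalerAr scalerA.
by rewrite mulrC.
Qed.

Definition Dd (a : 'I_n -> K) p := \sum_(i < n) a i *: mderiv i p.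

Lemma DdM a p q : Dd a (p * q) = Dd a p * q + p * Dd a q.
Proof.
rewrite /Dd mulr_suml mulr_sumr -big_split; apply: eq_bigr => i _.
by rewrite mderivM scalerDr -scalerAl -scalerAr.
Qed.

Lemma mderiv_linform i (v : 'rV[K]_n) : mderiv i (linform v) = v 0 i *: 1.
Proof.
rewrite /linform raddf_sum /= (bigD1 i) //= big1 ?addr0.
  by rewrite mderivZ mderivXi eqxx.
by move=> j /negbTE ji; rewrite mderivZ mderivXi ji scaler0.
Qed.

Lemma Dd_linform a (v : 'rV[K]_n) :
  Dd a (linform v) = (\sum_(i < n) v 0 i * a i) *: 1.
Proof.
rewrite /Dd scaler_suml; apply: eq_bigr => i _.
by rewrite mderiv_linform scalerA mulrC.
Qed.

Lemma Dd_prod_ann a (r : seq 'rV[K]_n) :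
  (forall v, v \in r -> \sum_(i < n) v 0 i * a i = 0) ->
  Dd a (\prod_(v <- r) linform v) = 0.
Proof.
elim: r => [|v r IH] h.
  by rewrite big_nil /Dd big1 // => i _; rewrite mderiv1 scaler0.
rewrite big_cons DdM Dd_linform h ?mem_head // scale0r mul0r add0r IH ?mulr0 //.
by move=> w wr; apply: h; rewrite inE wr orbT.
Qed.

Lemma DdD a p q : Dd a (p + q) = Dd a p + Dd a q.
Proof. by rewrite /Dd -big_split; apply: eq_bigr => i _; rewrite mderivD scalerDr. Qed.
Lemma DdZ a c p : Dd a (c *: p) = c *: Dd a p.
Proof. by rewrite /Dd scaler_sumr; apply: eq_bigr => i _; rewrite mderivZ !scalerA mulrC. Qed.
Lemma Dd_sum a I (r : seq I) F : Dd a (\sum_(i <- r) F i) = \sum_(i <- r) Dd a (F i).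
Proof.
elim: r => [|x r IH]; first by rewrite !big_nil /Dd big1 // => i _; rewrite mderiv0 scaler0.
by rewrite !big_cons DdD IH.
Qed.

Lemma in_sym_ann (U : {vspace 'rV[K]_n}) m p a :
  in_sym U m p -> (forall v, v \in U -> \sum_(i < n) v 0 i * a i = 0) -> Dd a p = 0.
Proof.
move=> [r [hr ->]] ha; rewrite Dd_sum big1_seq // => x xr.
by rewrite DdZ Dd_prod_ann ?scaler0 // => v vx; apply/ha/(hr _ xr).
Qed.

Lemma in_sym_homog (U : {vspace 'rV[K]_n}) m p : in_sym U m p -> p \is m.-homog.
Proof.
move=> [r [_ ->]]; rewrite big_seq; apply: rpred_sum => x _; apply: rpredZ.
case: x => c [s /= /eqP <-].
elim: s => [|v s IH]; first by rewrite big_nil dhomog1.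
rewrite big_cons /= -[(size s).+1]add1n; apply: dhomogM => //.
rewrite /linform; apply: rpred_sum => i _; apply: rpredZ.
apply/dhomogP => m0; rewrite msuppX inE => /eqP ->. exact: (mdeg1 i).
Qed.

Lemma act_in_sym (U : {vspace 'rV[K]_n}) m p g s :
  in_sym U m p -> (forall v, v \in U -> v *m g = s *: v) -> act g p = s ^+ m *: p.
Proof.
move=> [r [hr ->]] hg; rewrite act_sum scaler_sumr big_seq [RHS]big_seq.
apply: eq_bigr => x xr; rewrite actZ act_prod scalerA mulrC -scalerA; congr (_ *: _).
rewrite big_seq.
under eq_bigr => v vx do rewrite act_linform hg ?(hr _ xr) //.
by rewrite -big_seq prod_scale size_tuple.
Qed.

End Lin.


Section Key.
Variables (K : fieldType) (n : nat) (U W : {vspace 'rV[K]_n}).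
Hypotheses (hUW : (U + W = fullv)%VS) (hUW0 : (U :&: W = 0)%VS).

Lemma dimUW : (\dim U + \dim W)%N = n.
Proof.
rewrite -dimv_disjoint_sum // hUW dimvf. exact: mul1n.
Qed.

Let dU := \dim U.
Let dW := \dim W.
Let s := (vbasis U : seq _) ++ (vbasis W : seq _).

Definition Bmat : 'M[K]_n := \matrix_(i < n, j < n) (s`_i) 0 j.

Lemma row_Bmat i : row i Bmat = s`_i.
Proof. by apply/rowP => j; rewrite !mxE. Qed.

Lemma dU_le : (dU <= n)%N.
Proof. by rewrite -dimUW leq_addr. Qed.

Lemma coordU v : v \in U ->
  exists c : 'rV[K]_n, v = c *m Bmat /\ forall i : 'I_n, (dU <= i)%N -> c 0 i = 0.
Proof.
move=> vU; exists (\sum_(j < dU) coord (vbasis U) j v *: delta_mx 0 (widen_ord dU_le j)).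
split.
  rewrite {1}(coord_vbasis vU) mulmx_suml; apply: eq_bigr => j _.
  rewrite -scalemxAl -rowE row_Bmat /s nth_cat size_tuple /=.
  by rewrite (ltn_ord j).
move=> i hi; rewrite summxE big1 // => j _; rewrite !mxE.
suff /negbTE -> : i != widen_ord dU_le j by rewrite andbF mulr0.
apply/eqP => eij; move: hi; rewrite eij /= leqNgt ltn_ord.
by [].
Qed.

Lemma shift_lt (j : 'I_dW) : (dU + j < n)%N.
Proof. by rewrite -dimUW ltn_add2l ltn_ord. Qed.

Lemma coordW v : v \in W ->
  exists c : 'rV[K]_n, v = c *m Bmat /\ forall i : 'I_n, (i < dU)%N -> c 0 i = 0.
Proof.
move=> vW; exists (\sum_(j < dW) coord (vbasis W) j v *: delta_mx 0 (Ordinal (shift_lt j))).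
split.
  rewrite {1}(coord_vbasis vW) mulmx_suml; apply: eq_bigr => j _.
  rewrite -scalemxAl -rowE row_Bmat /s nth_cat size_tuple /=.
  by rewrite ltnNge leq_addr /= addKn.
move=> i hi; rewrite summxE big1 // => j _; rewrite !mxE.
suff /negbTE -> : i != Ordinal (shift_lt j) by rewrite andbF mulr0.
apply/eqP => eij; move: hi; rewrite eij /= ltnNge leq_addr.
by [].
Qed.

Lemma Bmat_unit : Bmat \in unitmx.
Proof.
have hv : forall v : 'rV[K]_n, exists c : 'rV[K]_n, v = c *m Bmat.
  move=> v; have : v \in (U + W)%VS by rewrite hUW memvf.
  case/memv_addP => u uU [w wW ->].
  have [cu [-> _]] := coordU uU; have [cw [-> _]] := coordW wW.
  by exists (cu + cw); rewrite mulmxDl.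
rewrite -row_full_unit -sub1mx; apply/row_subP => i; rewrite row1.
by have [c ->] := hv (delta_mx 0 i); exact: submxMl.
Qed.

End Key.


Section InSym.
Variables (K : fieldType) (n : nat) (U : {vspace 'rV[K]_n}).
Implicit Types (p q : {mpoly K[n]}).

Lemma in_sym0 m : in_sym U m 0.
Proof. by exists [::]; rewrite big_nil. Qed.

Lemma in_symD m p q : in_sym U m p -> in_sym U m q -> in_sym U m (p + q).
Proof.
move=> [r1 [h1 ->]] [r2 [h2 ->]]; exists (r1 ++ r2); split; last by rewrite big_cat.
by move=> a; rewrite mem_cat => /orP [/h1|/h2].
Qed.

Lemma in_symZ m c p : in_sym U m p -> in_sym U m (c *: p).
Proof.
move=> [r [h ->]]; exists [seq (c * a.1, a.2) | a <- r]; split.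
  by move=> a /mapP [b br ->] /=; exact: h br.
rewrite big_map scaler_sumr; apply: eq_bigr => a _; by rewrite scalerA.
Qed.

Lemma in_sym_sum m (I : eqType) (r : seq I) (F : I -> {mpoly K[n]}) :
  (forall i, i \in r -> in_sym U m (F i)) -> in_sym U m (\sum_(i <- r) F i).
Proof.
elim: r => [|x r IH] h; first by rewrite big_nil; exact: in_sym0.
rewrite big_cons; apply: in_symD; first by apply: h; rewrite mem_head.
by apply: IH => i ir; apply: h; rewrite inE ir orbT.
Qed.

Lemma in_sym_prod m (t : m.-tuple 'rV[K]_n) :
  (forall v, v \in t -> v \in U) -> in_sym U m (\prod_(v <- t) linform v).
Proof.
move=> h; exists [:: (1, t)]; split; first by move=> a; rewrite inE => /eqP -> /=.
by rewrite big_seq1 scale1r.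
Qed.

Lemma in_sym_mul m v p : v \in U -> in_sym U m p -> in_sym U m.+1 (linform v * p).
Proof.
move=> vU [r [h ->]]; exists [seq (a.1, cons_tuple v a.2) | a <- r]; split.
  move=> a /mapP [b br ->] w /=; rewrite inE => /orP [/eqP ->//|]; exact: h.
rewrite big_map mulr_sumr; apply: eq_bigr => a _ /=.
by rewrite -scalerAr big_cons.
Qed.

Lemma in_sym_Dd_prod a m (t : m.+1.-tuple 'rV[K]_n) :
  (forall v, v \in t -> v \in U) -> in_sym U m (Dd a (\prod_(v <- t) linform v)).
Proof.
elim: m t => [|m IH] t hx.
  case/tupleP: t hx => v t hx; rewrite tuple0 big_cons big_nil mulr1 Dd_linform.
  exists [:: (\sum_(i < n) v 0 i * a i, [tuple])]; split.
    by move=> b; rewrite inE => /eqP -> w /=; rewrite in_nil.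
  by rewrite big_cons !big_nil addr0.

case/tupleP: t hx => v t hx; rewrite big_cons DdM Dd_linform.
apply: in_symD.
  rewrite -scalerAl mul1r; apply: in_symZ; apply: in_sym_prod => w wt.
  by apply: hx; rewrite inE wt orbT.
apply: in_sym_mul; first by apply: hx; rewrite mem_head.
by apply: IH => w wt; apply: hx; rewrite inE wt orbT.
Qed.

Lemma in_sym_Dd m p a : in_sym U m.+1 p -> in_sym U m (Dd a p).
Proof.
move=> [r [h ->]]; rewrite Dd_sum; apply: in_sym_sum => x xr.
by rewrite DdZ; apply: in_symZ; apply: in_sym_Dd_prod; apply: h.
Qed.

Lemma in_sym_zero_space m p : U = 0%VS -> in_sym U m.+1 p -> p = 0.
Proof.
move=> U0 [r [h ->]]; rewrite big_seq big1 // => x xr.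
case: x xr => c t xr; have ht := h _ xr; move: ht => /=.
case/tupleP: t xr => v t xr ht; rewrite big_cons.
have : v \in U by apply: ht; rewrite mem_head.
rewrite U0 memv0 => /eqP ->.
suff -> : linform (0 : 'rV[K]_n) = 0 by rewrite mul0r scaler0.
by rewrite /linform big1 // => i _; rewrite mxE scale0r.
Qed.

End InSym.


Section Span.
Variables (K : fieldType) (n m : nat) (b : 'I_m -> {mpoly K[n]}).
Lemma sf0 : span_fam b 0.
Proof. by exists (fun _ => 0); rewrite big1 // => i _; rewrite scale0r. Qed.
Lemma sfD p q : span_fam b p -> span_fam b q -> span_fam b (p + q).
Proof.
move=> [c ->] [c' ->]; exists (fun i => c i + c' i).
by rewrite -big_split; apply: eq_bigr => i _; rewrite scalerDl.
Qed.
Lemma sfZ a p : span_fam b p -> span_fam b (a *: p).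
Proof.
move=> [c ->]; exists (fun i => a * c i).
by rewrite scaler_sumr; apply: eq_bigr => i _; rewrite scalerA.
Qed.
Lemma sf_sum (I : eqType) (r : seq I) F :
  (forall i, i \in r -> span_fam b (F i)) -> span_fam b (\sum_(i <- r) F i).
Proof.
elim: r => [|x r IH] h; first by rewrite big_nil; exact: sf0.
rewrite big_cons; apply: sfD; first by apply: h; rewrite mem_head.
by apply: IH => i ir; apply: h; rewrite inE ir orbT.
Qed.
Lemma sf_b i : span_fam b (b i).
Proof.
exists (fun j => (j == i)%:R); rewrite (bigD1 i) //= eqxx scale1r big1 ?addr0 //.
by move=> j /negbTE ->; rewrite scale0r.
Qed.
End Span.

Lemma gs_span (K : fieldType) n (f : {mpoly K[n]}) q :
  grad_span f q <-> span_fam (fun i => mderiv i f) q.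
Proof. by []. Qed.

Lemma gs_Dd (K : fieldType) n (f : {mpoly K[n]}) a : grad_span f (Dd a f).
Proof. by exists a. Qed.

Lemma map_Dd (k K : fieldType) (iota : {rmorphism k -> K}) n (p : {mpoly k[n]}) a :
  map_mpoly iota (Dd a p) = Dd (fun i => iota (a i)) (map_mpoly iota p).
Proof.
rewrite /Dd rmorph_sum; apply: eq_bigr => i _ /=.
by rewrite (map_mpolyZ iota) map_mderiv.
Qed.

Lemma map_prod_linform (k K : fieldType) (iota : {rmorphism k -> K}) n (s : seq 'rV[k]_n) :
  map_mpoly iota (\prod_(v <- s) linform v) = \prod_(v <- s) linform (map_mx iota v).
Proof.
elim: s => [|v s IH]; first by rewrite !big_nil rmorph1.
by rewrite !big_cons rmorphM /= IH map_linform.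
Qed.

Lemma act_in_sym_map (k K : fieldType) (iota : {rmorphism k -> K}) n
  (U : {vspace 'rV[k]_n}) m (p : {mpoly k[n]}) (g : 'M[K]_n) s :
  in_sym U m p -> (forall v, v \in U -> map_mx iota v *m g = s *: map_mx iota v) ->
  act g (map_mpoly iota p) = s ^+ m *: map_mpoly iota p.
Proof.
move=> [r [hr ->]] hg; rewrite rmorph_sum act_sum scaler_sumr big_seq [RHS]big_seq.
apply: eq_bigr => x xr /=; rewrite (map_mpolyZ iota) actZ map_prod_linform act_prod.
rewrite scalerA mulrC -scalerA; congr (_ *: _).
rewrite big_seq.
under eq_bigr => v vx do rewrite act_linform hg ?(hr _ xr) //.
rewrite -big_seq -(big_map (map_mx iota) predT (fun w => linform (s *: w))).
by rewrite prod_scale size_map size_tuple big_map.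
Qed.

Lemma map_mpoly_idfun (k : fieldType) n (p : {mpoly k[n]}) :
  map_mpoly (idfun : {rmorphism k -> k}) p = p.
Proof. by apply/mpolyP => m; rewrite mcoeff_map_mpoly. Qed.


Lemma gs_map (k K : fieldType) (iota : {rmorphism k -> K}) n (p q : {mpoly k[n]}) :
  grad_span p q -> grad_span (map_mpoly iota p) (map_mpoly iota q).
Proof. by move=> [c ->]; rewrite -/(Dd c p) map_Dd; apply: gs_Dd. Qed.

Lemma stab_b (K : fieldType) n (g : 'M[K]_n) (P : {mpoly K[n]}) s :
  act g P = s *: P -> s != 0 ->
  forall l, mderiv l P = act g (s^-1 *: \sum_(i < n) g i l *: mderiv i P).
Proof.
move=> hP s0 l; rewrite actZ act_sum.
under eq_bigr do rewrite actZ.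
by rewrite -chain hP mderivZ scalerA mulVf // scale1r.
Qed.

Lemma stab_a (K : fieldType) n (g : 'M[K]_n) (P : {mpoly K[n]}) s :
  g \in unitmx -> act g P = s *: P ->
  forall l, act g (mderiv l P) = s *: \sum_(j < n) invmx g j l *: mderiv j P.
Proof.
move=> gu hP l; rewrite scaler_sumr.
under eq_bigr do rewrite scalerA mulrC -scalerA -mderivZ -hP chain scaler_sumr.
rewrite exchange_big /=.
under eq_bigr => j _ do under eq_bigr => i _ do rewrite scalerA mulrC.
under eq_bigr do rewrite -scaler_suml.
have e := mulmxV gu.
have ee : forall j, \sum_(i < n) g j i * invmx g i l = (j == l)%:R.
  by move=> j; have := congr1 (fun M : 'M_n => M j l) e; rewrite !mxE.
under eq_bigr do rewrite ee.
rewrite (bigD1 l) //= eqxx scale1r big1 ?addr0 //.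
by move=> i /negbTE ->; rewrite scale0r.
Qed.


Section DS.
Variables (k : fieldType) (n d : nat) (U W : {vspace 'rV[k]_n}).
Hypotheses (hUW : (U + W = fullv)%VS) (hUW0 : (U :&: W = 0)%VS).
Variables (f1 f2 : {mpoly k[n]}).
Hypotheses (nz1 : f1 != 0) (nz2 : f2 != 0) (hf1 : in_sym U d.+1 f1) (hf2 : in_sym W d.+1 f2).

Local Notation B := (Bmat U W).
Local Notation Q := (invmx (Bmat U W)).
Local Notation u := (\dim U).

Lemma U_neq0 : U != 0%VS.
Proof. by apply/eqP => U0; move: nz1; rewrite (in_sym_zero_space U0 hf1) eqxx. Qed.
Lemma W_neq0 : W != 0%VS.
Proof. by apply/eqP => W0; move: nz2; rewrite (in_sym_zero_space W0 hf2) eqxx. Qed.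

Lemma u_gt0 : (0 < u)%N.
Proof. by rewrite lt0n dimv_eq0 U_neq0. Qed.
Lemma u_lt : (u < n)%N.
Proof.
apply: (leq_trans _ (eq_leq (dimUW hUW hUW0))).
by rewrite -addn1 leq_add2l lt0n dimv_eq0 W_neq0.
Qed.

Lemma B_unit : B \in unitmx.
Proof. exact: Bmat_unit. Qed.
Lemma Q_unit : Q \in unitmx.
Proof. by rewrite unitmx_inv B_unit. Qed.

Lemma vQU v : v \in U -> forall i : 'I_n, (u <= i)%N -> (v *m Q) 0 i = 0.
Proof.
move=> vU; have [c [-> hc]] := coordU hUW hUW0 vU.
by rewrite mulmxK ?B_unit.
Qed.
Lemma vQW v : v \in W -> forall i : 'I_n, (i < u)%N -> (v *m Q) 0 i = 0.
Proof.
move=> vW; have [c [-> hc]] := coordW hUW hUW0 vW.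
by rewrite mulmxK ?B_unit.
Qed.

Definition qv (i : 'I_n) : 'I_n -> k := fun j => Q j i.

Lemma ann_U m p : in_sym U m p -> forall i : 'I_n, (u <= i)%N -> Dd (qv i) p = 0.
Proof.
move=> hp i hi; apply: (in_sym_ann hp); move=> v vU.
by have := vQU vU hi; rewrite mxE.
Qed.
Lemma ann_W m p : in_sym W m p -> forall i : 'I_n, (i < u)%N -> Dd (qv i) p = 0.
Proof.
move=> hp i hi; apply: (in_sym_ann hp); move=> v vW.
by have := vQW vW hi; rewrite mxE.
Qed.

Lemma deriv_decomp p l : mderiv l p = \sum_(i < n) B i l *: Dd (qv i) p.
Proof.
rewrite /Dd.
under eq_bigr do rewrite scaler_sumr.
rewrite exchange_big /=.
under eq_bigr => j _ do under eq_bigr => i _ do rewrite scalerA mulrC.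
under eq_bigr do rewrite -scaler_suml.
have e := mulVmx B_unit.
have ee : forall j, \sum_(i < n) qv i j * B i l = (j == l)%:R.
  by move=> j; have := congr1 (fun M : 'M_n => M j l) e; rewrite !mxE.
under eq_bigr do rewrite ee.
rewrite (bigD1 l) //= eqxx scale1r big1 ?addr0 //.
by move=> i /negbTE ->; rewrite scale0r.
Qed.

Lemma G1 m m' p1 p2 : in_sym U m p1 -> in_sym W m' p2 -> forall l,
  grad_span (p1 + p2) (mderiv l p1) /\ grad_span (p1 + p2) (mderiv l p2).
Proof.
move=> h1 h2 l; rewrite !gs_span !(deriv_decomp _ l); split.
  apply: sf_sum => i _; case: (ltnP i u) => hi.
    by rewrite -[Dd _ p1]addr0 -(ann_W h2 hi) -DdD; apply: sfZ; apply: gs_Dd.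
  by rewrite (ann_U h1 hi) scaler0; apply: sf0.
apply: sf_sum => i _; case: (ltnP i u) => hi.
  by rewrite (ann_W h2 hi) scaler0; apply: sf0.
by rewrite -[Dd _ p2]add0r -(ann_U h1 hi) -DdD; apply: sfZ; apply: gs_Dd.
Qed.

Definition Emat (K : fieldType) (iota : {rmorphism k -> K}) (s1 s2 : K) : 'M[K]_n :=
  map_mx iota Q *m diag_mx (\row_(i < n) (if (i < u)%N then s1 else s2)) *m invmx (map_mx iota Q).

Section EmatK.
Variables (K : fieldType) (iota : {rmorphism k -> K}).

Lemma Emat_gen (v : 'rV[k]_n) (s1 s2 s : K) :
  (forall i : 'I_n, (v *m Q) 0 i != 0 -> (if (i < u)%N then s1 else s2) = s) ->
  map_mx iota v *m Emat iota s1 s2 = s *: map_mx iota v.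
Proof.
move=> hv; rewrite /Emat !mulmxA -map_mxM.
have key : forall x : 'rV[k]_n, (forall i : 'I_n, x 0 i != 0 -> (if (i < u)%N then s1 else s2) = s) ->
   map_mx iota x *m diag_mx (\row_(i < n) (if (i < u)%N then s1 else s2)) = s *: map_mx iota x.
  move=> x hx; apply/rowP => j; rewrite mul_mx_diag !mxE.
  have [z|nz] := eqVneq (x 0 j) 0; first by rewrite z rmorph0 mul0r mulr0.
  by rewrite (hx _ nz) mulrC.
rewrite key //.
by rewrite -scalemxAl map_mxM mulmxK ?map_unitmx ?Q_unit.
Qed.

Lemma Emat_U v s1 s2 : v \in U -> map_mx iota v *m Emat iota s1 s2 = s1 *: map_mx iota v.
Proof.
move=> vU; apply: Emat_gen => i; case: ltnP => // hi.
by rewrite (vQU vU hi) eqxx.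
Qed.
Lemma Emat_W v s1 s2 : v \in W -> map_mx iota v *m Emat iota s1 s2 = s2 *: map_mx iota v.
Proof.
move=> vW; apply: Emat_gen => i; case: ltnP => // hi.
by rewrite (vQW vW hi) eqxx.
Qed.

Lemma act_E1 m p s1 s2 : in_sym U m p ->
  act (Emat iota s1 s2) (map_mpoly iota p) = s1 ^+ m *: map_mpoly iota p.
Proof. by move=> h; apply: (act_in_sym_map h) => v vU; apply: Emat_U. Qed.
Lemma act_E2 m p s1 s2 : in_sym W m p ->
  act (Emat iota s1 s2) (map_mpoly iota p) = s2 ^+ m *: map_mpoly iota p.
Proof. by move=> h; apply: (act_in_sym_map h) => v vW; apply: Emat_W. Qed.

Lemma IND a b : a *: map_mpoly iota f1 + b *: map_mpoly iota f2 = 0 -> a = 0 /\ b = 0.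
Proof.
move=> h; split.
  have := congr1 (act (Emat iota 1 0)) h.
  rewrite act0 actD !actZ (act_E1 _ _ hf1) (act_E2 _ _ hf2) expr1n expr0n /=.
  rewrite scale0r scaler0 addr0 scale1r => /eqP; rewrite scaler_eq0 => /orP [/eqP//|].
  by move=> /eqP /map_mpoly_eq0 f10; move: nz1; rewrite f10 eqxx.
have := congr1 (act (Emat iota 0 1)) h.
rewrite act0 actD !actZ (act_E1 _ _ hf1) (act_E2 _ _ hf2) expr1n expr0n /=.
rewrite scale0r scaler0 add0r scale1r => /eqP; rewrite scaler_eq0 => /orP [/eqP//|].
by move=> /eqP /map_mpoly_eq0 f20; move: nz2; rewrite f20 eqxx.
Qed.

Lemma Emat_unit s1 s2 : s1 != 0 -> s2 != 0 -> Emat iota s1 s2 \in unitmx.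
Proof.
move=> h1 h2; rewrite /Emat !unitmx_mul unitmx_inv map_unitmx Q_unit /=.
rewrite andbT unitmxE det_diag unitfE; apply/prodf_neq0 => i _; rewrite mxE.
by case: ifP.
Qed.

End EmatK.

Section Part1.
Variables (K : fieldType) (iota : {rmorphism k -> K}).
Local Notation F := (map_mpoly iota (f1 + f2)).
Local Notation F1 := (map_mpoly iota f1).
Local Notation F2 := (map_mpoly iota f2).

Lemma mapF : F = F1 + F2.
Proof. exact: rmorphD. Qed.

Lemma map_deriv_in l : grad_span (F1 + F2) (mderiv l F1) /\ grad_span (F1 + F2) (mderiv l F2).
Proof.
have [h1 h2] := G1 hf1 hf2 l; rewrite -mapF.
by split; rewrite -map_mderiv; apply: gs_map.
Qed.

Lemma part1_rho s1 s2 : s1 != 0 -> s2 != 0 ->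
  same_sp (act_sp (Emat iota s1 s2) (grad_span F)) (grad_span F).
Proof.
move=> h1 h2; rewrite mapF; set g := Emat iota s1 s2.
have gu : g \in unitmx by apply: Emat_unit.
have a1 : act g F1 = s1 ^+ d.+1 *: F1 by apply: act_E1.
have a2 : act g F2 = s2 ^+ d.+1 *: F2 by apply: act_E2.
have n1 : s1 ^+ d.+1 != 0 by rewrite expf_neq0.
have n2 : s2 ^+ d.+1 != 0 by rewrite expf_neq0.
move=> q; split.
  move=> [p [[c ->] ->]]; rewrite act_sum gs_span; apply: sf_sum => i _.
  rewrite actZ mderivD actD; apply: sfZ; apply: sfD.
    rewrite (stab_a gu a1); apply: sfZ; apply: sf_sum => j _; apply: sfZ.
    exact: (map_deriv_in j).1.
  rewrite (stab_a gu a2); apply: sfZ; apply: sf_sum => j _; apply: sfZ.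
  exact: (map_deriv_in j).2.
move=> [c ->].
exists (\sum_(l < n) c l *: ((s1 ^+ d.+1)^-1 *: \sum_(i < n) g i l *: mderiv i F1 +
                             (s2 ^+ d.+1)^-1 *: \sum_(i < n) g i l *: mderiv i F2)).
split.
  rewrite gs_span; apply: sf_sum => l _; apply: sfZ; apply: sfD; apply: sfZ;
    apply: sf_sum => i _; apply: sfZ.
    exact: (map_deriv_in i).1.
  exact: (map_deriv_in i).2.
rewrite act_sum; apply: eq_bigr => l _.
rewrite actZ actD mderivD; congr (_ *: (_ + _)); exact: stab_b.
Qed.

Lemma part1_stab g : \det g = 1 -> same_point F (act g F) ->
  same_sp (act_sp g (grad_span F)) (grad_span F).
Proof.
move=> dg [c [c0 hc]].
have gu : g \in unitmx by rewrite unitmxE dg unitr1.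
move=> q; split.
  move=> [p [[x ->] ->]]; rewrite act_sum gs_span; apply: sf_sum => i _.
  rewrite actZ (stab_a gu hc); apply: sfZ; apply: sfZ; apply: sf_sum => j _; apply: sfZ.
  exact: sf_b.
move=> [x ->].
exists (\sum_(l < n) x l *: (c^-1 *: \sum_(i < n) g i l *: mderiv i F)).
split.
  rewrite gs_span; apply: sf_sum => l _; apply: sfZ; apply: sfZ;
    apply: sf_sum => i _; apply: sfZ; exact: sf_b.
rewrite act_sum; apply: eq_bigr => l _.
rewrite actZ; congr (_ *: _); exact: stab_b.
Qed.

Lemma part1_move s1 s2 : s1 ^+ d.+1 != s2 ^+ d.+1 ->
  ~ same_point F (act (Emat iota s1 s2) F).
Proof.
move=> hs [c [c0 hc]]; move: hc; rewrite mapF actD (act_E1 iota s1 s2 hf1) (act_E2 iota s1 s2 hf2).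
move/eqP; rewrite -subr_eq0 scalerDr opprD addrACA -!scalerBl => /eqP /IND [e1 e2].
by move: hs; rewrite (subr0_eq e1) (subr0_eq e2) eqxx.
Qed.

End Part1.

Section Part23.

Definition Gc (c : k) := f1 + c *: f2.

Lemma G_homog c : Gc c \is (d.+1).-homog.
Proof. by rewrite rpredD ?rpredZ // (in_sym_homog hf1, in_sym_homog hf2). Qed.

Lemma G_indep a b : a *: f1 + b *: f2 = 0 -> a = 0 /\ b = 0.
Proof.
move=> h; apply: (IND (iota := (idfun : {rmorphism k -> k}))).
by rewrite !map_mpoly_idfun.
Qed.

Lemma G_nz c : Gc c != 0.
Proof.
apply/eqP => h; have := @G_indep 1 c; rewrite scale1r => /(_ h) [].
by move/eqP; rewrite oner_eq0.
Qed.

Lemma G_grad c : c != 0 -> same_sp (grad_span (Gc c)) (grad_span (f1 + f2)).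
Proof.
move=> c0 q; rewrite !gs_span; split.
  move=> [x ->]; apply: sf_sum => i _; apply: sfZ; rewrite mderivD mderivZ.
  have [h1 h2] := G1 hf1 hf2 i.
  by apply: sfD => //; apply: sfZ.
move=> [x ->]; apply: sf_sum => i _; apply: sfZ; rewrite mderivD.
have [h1 h2] := G1 hf1 (in_symZ c hf2) i.
apply: sfD => //; rewrite -[mderiv i f2]scale1r -(mulVf c0) -scalerA -mderivZ.
by apply: sfZ.
Qed.

Lemma G_distinct c c' : c != c' -> ~ same_point (Gc c) (Gc c').
Proof.
move=> cc [l [l0 h]]; move: h; rewrite /Gc scalerDr scalerA.
move/eqP; rewrite -subr_eq0 opprD addrACA -{1}(scale1r f1) -!scalerBl.
move=> /eqP /G_indep [e1 e2]; move: cc.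
have l1 := subr0_eq e1; have := subr0_eq e2; rewrite -l1 mul1r => ->.
by rewrite eqxx.
Qed.

End Part23.

Section Part3.
Hypothesis hind : forall c : 'I_n -> k, \sum_(i < n) c i *: mderiv i (f1 + f2) = 0 -> forall i, c i = 0.

Lemma Dd_lin m (c : 'I_m -> k) (a : 'I_m -> 'I_n -> k) (p : {mpoly k[n]}) :
  \sum_(i < m) c i *: Dd (a i) p = Dd (fun j => \sum_(i < m) c i * a i j) p.
Proof.
rewrite /Dd; under eq_bigr do rewrite scaler_sumr.
rewrite exchange_big /=; apply: eq_bigr => j _; rewrite scaler_suml.
by apply: eq_bigr => i _; rewrite scalerA.
Qed.

Lemma free_phi m (phi : 'I_m -> 'I_n) : injective phi -> forall c : 'I_m -> k,
  \sum_(i < m) c i *: Dd (qv (phi i)) (f1 + f2) = 0 -> forall i, c i = 0.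
Proof.
move=> inj c; rewrite Dd_lin => /hind hz i0.
pose y : 'cV[k]_n := \sum_(i < m) c i *: delta_mx (phi i) 0.
have Qy : Q *m y = 0.
  apply/colP => j; rewrite mulmx_sumr summxE !mxE -[RHS](hz j).
  apply: eq_bigr => i _; rewrite -scalemxAr -colE !mxE; by rewrite mulrC.
have y0 : y = 0 by rewrite -(mulKmx Q_unit y) Qy mulmx0.
have := congr1 (fun M : 'cV[k]_n => M (phi i0) 0) y0; rewrite summxE mxE.
rewrite (bigD1 i0) //= big1 ?addr0.
  by rewrite !mxE !eqxx mulr1.
move=> i ii0; rewrite !mxE; case: eqP => [/inj e|_]; last by rewrite mulr0.
by move: ii0; rewrite e eqxx.
Qed.

Definition widenU (i : 'I_u) : 'I_n := widen_ord (ltnW u_lt) i.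
Definition shiftW (j : 'I_(\dim W)) : 'I_n := Ordinal (shift_lt hUW hUW0 j).

Lemma widenU_inj : injective widenU.
Proof. by move=> i j /(congr1 val) /= /val_inj. Qed.
Lemma shiftW_inj : injective shiftW.
Proof. by move=> i j /(congr1 val) /= /addnI /val_inj. Qed.

Lemma split_sum (F : 'I_n -> {mpoly k[n]}) :
  \sum_(i < n) F i = \sum_(i < u) F (widenU i) + \sum_(j < \dim W) F (shiftW j).
Proof.
have e := dimUW hUW hUW0.
rewrite (reindex (cast_ord e)) /=; last first.
  by apply: onW_bij; exists (cast_ord (esym e)) => i; rewrite ?cast_ordK ?cast_ordKV.
rewrite big_split_ord /=; congr (_ + _); apply: eq_bigr => i _; congr F; exact: val_inj.
Qed.

Lemma balanced : is_balanced_direct_sum d (grad_span (f1 + f2)).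
Proof.
exists U, W; do 4 (split; first by [exact: U_neq0 | exact: W_neq0 | done]).
exists (fun i => Dd (qv (widenU i)) (f1 + f2)), (fun j => Dd (qv (shiftW j)) (f1 + f2)).
split.
  move=> i; rewrite DdD (ann_W hf2) ?addr0; first exact: in_sym_Dd.
  by rewrite /= ltn_ord.
split; first exact: free_phi widenU_inj.
split.
  move=> j; rewrite DdD (ann_U hf1) ?add0r; first exact: in_sym_Dd.
  by rewrite /= leq_addr.
split; first exact: free_phi shiftW_inj.
move=> q; split.
  move=> [x ->].
  under eq_bigr do rewrite deriv_decomp split_sum scalerDr.
  rewrite big_split /=; do 2 eexists; split; last split; last reflexivity.
    apply: sf_sum => l _; apply: sfZ; apply: sf_sum => i _; apply: sfZ; exact: sf_b.
  apply: sf_sum => l _; apply: sfZ; apply: sf_sum => i _; apply: sfZ; exact: sf_b.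
move=> [q1 [q2 [[x1 ->] [[x2 ->] ->]]]]; rewrite gs_span.
apply: sfD; apply: sf_sum => i _; apply: sfZ; exact: gs_Dd.
Qed.

Lemma G_deriv c : c != 1 -> forall e : k, exists i : 'I_n, mderiv i ((f1 + f2) - e *: Gc c) != 0.
Proof.
move=> c1 e; case: (pickP (fun i => mderiv i ((f1 + f2) - e *: Gc c) != 0)) => [i hi|h].
  by exists i.
have hD : forall a, Dd a ((f1 + f2) - e *: Gc c) = 0.
  move=> a; rewrite /Dd big1 // => i _; have /negbFE/eqP -> := h i.
  by rewrite scaler0.
have eP : (f1 + f2) - e *: Gc c = (1 - e) *: f1 + (1 - e * c) *: f2.
  by rewrite /Gc scalerDr scalerA !scalerBl !scale1r addrACA opprD.
have key : forall i : 'I_n, Dd (qv i) (f1 + f2) != 0.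
  move=> i; apply/eqP => h0.
  have := @free_phi 1 (fun _ => i) _ (fun _ => 1).
  rewrite big_ord1 scale1r h0 => /(_ (fun a b _ => etrans (ord1 a) (esym (ord1 b)))).
  by move=> /(_ erefl ord0) /eqP; rewrite oner_eq0.
pose i0 : 'I_n := Ordinal (ltn_trans u_gt0 u_lt).
pose i1 : 'I_n := Ordinal u_lt.
have h0 := hD (qv i0); have h1 := hD (qv i1).
rewrite eP !DdD !DdZ in h0 h1.
have a0 : (i0 < u)%N by rewrite /= u_gt0.
have a1 : (u <= i1)%N by [].
have q0 : Dd (qv i0) f1 = Dd (qv i0) (f1 + f2) by rewrite DdD (ann_W hf2 a0) addr0.
have q1 : Dd (qv i1) f2 = Dd (qv i1) (f1 + f2) by rewrite DdD (ann_U hf1 a1) add0r.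
move: h0; rewrite (ann_W hf2 a0) scaler0 addr0 q0.
move=> /eqP; rewrite scaler_eq0 (negbTE (key i0)) orbF subr_eq0 => /eqP e1.
move: h1; rewrite (ann_U hf1 a1) scaler0 add0r q1.
move=> /eqP; rewrite scaler_eq0 (negbTE (key i1)) orbF subr_eq0 -e1 mul1r => /eqP e2.
by move: c1; rewrite e2 eqxx.
Qed.

End Part3.

End DS.


Lemma sum_if n u (a b : int) : (u <= n)%N ->
  \sum_(i < n) (if (i < u)%N then a else b) = a *+ u + b *+ (n - u).
Proof.
move=> un; rewrite -(big_mkord xpredT (fun i => if (i < u)%N then a else b)).
rewrite (big_cat_nat (leq0n u) un) /=.
have -> : \sum_(0 <= i < u) (if (i < u)%N then a else b) = \sum_(0 <= i < u) a.
  by apply: eq_big_nat => i /andP [_ ->].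
have -> : \sum_(u <= i < n) (if (i < u)%N then a else b) = \sum_(u <= i < n) b.
  by apply: eq_big_nat => i /andP [ui _]; rewrite ltnNge ui.
by rewrite !sumr_const_nat subn0.
Qed.

Lemma big_gcd_dvd n (F : 'I_n -> nat) j : (\big[gcdn/0%N]_(i < n) F i %| F j)%N.
Proof. by rewrite (bigD1 j) //= dvdn_gcdl. Qed.

Lemma weights (n u : nat) : (0 < u)%N -> (u < n)%N ->
  let g := gcdn u (n - u) in
  let w := fun i : 'I_n => if (i < u)%N then Posz ((n - u) %/ g)%N else - Posz (u %/ g)%N in
  \sum_(i < n) w i = 0 /\ (exists i, w i != 0) /\ \big[gcdn/0%N]_(i < n) `|w i|%N = 1%N.
Proof.
move=> u0 un g w.
have g0 : (0 < g)%N by rewrite gcdn_gt0 u0.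
have nu0 : (0 < n - u)%N by rewrite subn_gt0.
have gu : (g %| u)%N by apply: dvdn_gcdl.
have gnu : (g %| n - u)%N by apply: dvdn_gcdr.
have A0 : (0 < (n - u) %/ g)%N by rewrite divn_gt0 // dvdn_leq.
have C0 : (0 < u %/ g)%N by rewrite divn_gt0 // dvdn_leq.
split.
  rewrite /w sum_if; last exact: ltnW.
  have e : ((n - u) %/ g * u = u %/ g * (n - u))%N.
    by rewrite !divn_mulAC // mulnC.
  have h : forall a b : nat, Posz a *+ b = Posz (a * b)%N.
    by move=> a b; elim: b => [|b IH]; rewrite ?muln0 // mulrS IH mulnS PoszD.
  by rewrite mulNrn !h e subrr.
split.
  exists (Ordinal (ltn_trans u0 un)); rewrite /w /= u0.
  by rewrite eqz_nat -lt0n.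
apply/eqP; rewrite -dvdn1.
have h1 := big_gcd_dvd (fun i => `|w i|%N) (Ordinal (ltn_trans u0 un)).
have h2 := big_gcd_dvd (fun i => `|w i|%N) (Ordinal un).
rewrite /w /= u0 ltnn abszN !absz_nat in h1 h2.
rewrite /w.
suff <- : gcdn ((n - u) %/ g)%N (u %/ g)%N = 1%N by rewrite dvdn_gcd h1 h2.
have e : (gcdn ((n - u) %/ g) (u %/ g) * g = g)%N.
  by rewrite muln_gcdl !divnK // /g gcdnC.
by apply/eqP; rewrite -(eqn_pmul2r g0) mul1n e.
Qed.

Lemma frac_t (k : fieldType) (N : nat) : (0 < N)%N ->
  (tofrac ('X : {poly k})) ^+ N != 1.
Proof.
move=> N0; rewrite -rmorphXn -tofrac1 tofrac_eq; apply/eqP => h.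
have := congr1 (fun p : {poly k} => size p) h; rewrite /= size_polyXn size_poly1.
by move=> -[] N00; move: N0; rewrite N00.
Qed.

Lemma frac_t0 (k : fieldType) : tofrac ('X : {poly k}) != 0.
Proof. by rewrite tofrac_eq0 polyX_eq0. Qed.

Lemma pow_helper (K : fieldType) (t : K) (A C d : nat) : t ^+ C != 0 ->
  (t ^+ A) ^+ d.+1 = ((t ^+ C)^-1) ^+ d.+1 -> t ^+ ((A + C) * d.+1) = 1.
Proof.
move=> tC0 h.
rewrite mulnDl exprD (exprM t A d.+1) (exprM t C d.+1) h exprVn mulVf //.
by rewrite expf_neq0.
Qed.


Unset Implicit Arguments. Set Strict Implicit. Set Printing Implicit Defensive.

Theorem lemma2p1 (k : fieldType) (n d : nat) (f : {mpoly k[n]}) :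
  f \is (d.+1).-homog ->
  is_direct_sum d f ->
  (* (1) *)
  ((exists a : k, a != 0 /\ a != 1) ->
    exists (Q : 'M[k]_n) (w : 'I_n -> int),
      one_param_subgroup Q w /\
      (* rho . <grad f> = <grad f>  (on all field-valued points of G_m) *)
      (forall (K : fieldType) (iota : {rmorphism k -> K}) (t : K), t != 0 ->
         same_sp (act_sp (rho_at iota Q w t) (grad_span (map_mpoly iota f)))
                 (grad_span (map_mpoly iota f))) /\
      (* rho . bar f <> bar f *)
      (exists (K : fieldType) (iota : {rmorphism k -> K}) (t : K), t != 0 /\
         ~ same_point (map_mpoly iota f) (act (rho_at iota Q w t) (map_mpoly iota f))) /\
      (* consequently Stab_SL(bar f) is a subgroup of Stab_SL(<grad f>)
         (and proper, witnessed by rho) *)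
      (forall (K : fieldType) (iota : {rmorphism k -> K}) (g : 'M[K]_n),
         \det g = 1 -> same_point (map_mpoly iota f) (act g (map_mpoly iota f)) ->
         same_sp (act_sp g (grad_span (map_mpoly iota f))) (grad_span (map_mpoly iota f)))) /\
  (* (2) *)
  (exists G : k -> {mpoly k[n]},
     (forall c, c != 0 ->
        G c \is (d.+1).-homog /\ G c != 0 /\ same_sp (grad_span (G c)) (grad_span f)) /\
     (forall c c', c != 0 -> c' != 0 -> c != c' -> ~ same_point (G c) (G c'))) /\
  (* (3) *)
  ((forall c : 'I_n -> k, \sum_(i < n) c i *: mderiv i f = 0 -> forall i, c i = 0) ->
     is_balanced_direct_sum d (grad_span f) /\
     exists G : k -> {mpoly k[n]},
       (forall c, c != 0 -> c != 1 ->
          G c \is (d.+1).-homog /\ G c != 0 /\ same_sp (grad_span (G c)) (grad_span f) /\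
          (forall e : k, exists i : 'I_n, mderiv i (f - e *: G c) != 0)) /\
       (forall c c', c != 0 -> c != 1 -> c' != 0 -> c' != 1 -> c != c' ->
          ~ same_point (G c) (G c'))).
Proof.
move=> _ [U [W [hUW [hUW0 [f1 [f2 [nz1 [nz2 [hf1 [hf2 ef]]]]]]]]]]; subst f.
split; last split.
- move=> _.
  have u0 := u_gt0 nz1 hf1; have un := u_lt hUW hUW0 nz2 hf2.
  have [hs [[i0 hi0] hg]] := weights u0 un.
  set g := gcdn (\dim U) (n - \dim U) in hs hi0 hg.
  set A := ((n - \dim U) %/ g)%N in hs hi0 hg.
  set C := (\dim U %/ g)%N in hs hi0 hg.
  exists (invmx (Bmat U W)).
  exists (fun i : 'I_n => if (i < \dim U)%N then Posz A else - Posz C).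
  have rhoE : forall (K : fieldType) (iota : {rmorphism k -> K}) (t : K),
      rho_at iota (invmx (Bmat U W)) (fun i : 'I_n => if (i < \dim U)%N then Posz A else - Posz C) t
      = Emat U W iota (t ^ Posz A) (t ^ (- Posz C)).
    move=> K iota t; rewrite /rho_at /Emat; congr (_ *m _ *m _); congr diag_mx.
    by apply/rowP => i; rewrite !mxE; case: ifP.
  split.
    by split; [rewrite unitmx_inv; exact: Bmat_unit | split; [exact: hs | split; [exists i0 |]]].
  split.
    move=> K iota t t0; rewrite rhoE; apply: (part1_rho hUW hUW0 hf1 hf2) => //; by apply: expfz_neq0.
  split.
    exists {fraction {poly k}}, (@tofrac _ \o polyC), (tofrac 'X); split; first exact: frac_t0.
    rewrite rhoE; apply: (part1_move hUW hUW0 nz1 nz2 hf1 hf2).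
    have g0 : (0 < g)%N by rewrite gcdn_gt0 u0.
    have A0 : (0 < A)%N by rewrite divn_gt0 // dvdn_leq ?subn_gt0 // dvdn_gcdr.
    have C0 : (0 < C)%N by rewrite divn_gt0 // dvdn_leq // dvdn_gcdl.
    set t := tofrac ('X : {poly k}).
    have t0 : t != 0 by apply: frac_t0.
    have tC0 : t ^+ C != 0 by rewrite expf_neq0.
    rewrite -exprnN.
    change ((t ^+ A) ^+ d.+1 != ((t ^+ C)^-1) ^+ d.+1).
    apply/eqP => h.
    have := pow_helper tC0 h.
    by apply/eqP; apply: frac_t; rewrite muln_gt0 addn_gt0 A0.
  by move=> K iota g0 dg sp; apply: part1_stab.
- exists (Gc f1 f2); split.
    move=> c c0; split; first exact: G_homog hf1 hf2 c.
    by split; [apply: (G_nz hUW hUW0 nz1 nz2 hf1 hf2) | apply: (G_grad hUW hUW0 hf1 hf2)].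
  by move=> c c' _ _; apply: (G_distinct hUW hUW0 nz1 nz2 hf1 hf2).
move=> hind; split; first exact: (balanced hUW hUW0 nz1 nz2 hf1 hf2 hind).
exists (Gc f1 f2); split.
  move=> c c0 c1; split; first exact: G_homog hf1 hf2 c.
  split; first by apply: (G_nz hUW hUW0 nz1 nz2 hf1 hf2).
  split; first by apply: (G_grad hUW hUW0 hf1 hf2).
  by apply: (G_deriv hUW hUW0 nz1 nz2 hf1 hf2 hind).
by move=> c c' _ _ _ _; apply: (G_distinct hUW hUW0 nz1 nz2 hf1 hf2).
Qed.
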